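(* The $k$-involutions $\mathcal{I}_{t_{(-1,-1)}}$, $\mathcal{I}_{t_{(-1,1)}}$ and $\mathcal{I}_{t_{(1,-1)}}$ of $G$ are pairwise isomorphic.
   Context: Let $k$ be a field with $\mathrm{char}(k)\neq 2$. Let $C$ be the split octonion algebra over $k$: $C=M_2(k)\times M_2(k)$ with elements $(x,y)$, $\bar x=\begin{bmatrix}x_{22}&-x_{12}\\-x_{21}&x_{11}\end{bmatrix}$ for $x=(x_{ij})$, multiplication $(x,y)(u,v)=(xu+\bar v y,\ vx+y\bar u)$, norm $N((x,y))=\det x-\det y$, identity $e=(I_2,0)$. Linear maps on $C$ are $8\times8$ matrices in the ordered basis $(E_{11},0),(E_{12},0),(E_{21},0),(E_{22},0),(0,E_{11}),(0,E_{12}),(0,E_{21}),(0,E_{22})$. $G=\mathrm{Aut}(C)$; $\mathcal{I}_g(x)=gxg^{-1}$. $t_{(\beta,\gamma)}=\mathrm{diag}(1,\beta\gamma,\beta^{-1}\gamma^{-1},1,\gamma^{-1},\beta,\beta^{-1},\gamma)$. A $k$-involution of $G$ is an automorphism of $G$ of order exactly $2$ defined over $k$; $\theta_1\cong\theta_2$ if $\theta_2=\mathcal{I}_g\theta_1\mathcal{I}_g^{-1}$ for some $g\in G(k)$. *)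

(* Defs.v *)
From HB Require Import structures.
From mathcomp Require Import all_boot all_order all_algebra.
Set Implicit Arguments. Unset Strict Implicit. Unset Printing Implicit Defensive.
Import GRing.Theory.
Local Open Scope ring_scope.

(* Split octonions C = M_2(R) x M_2(R). *)
Definition oct (R : Type) := ('M[R]_2 * 'M[R]_2)%type.

Definition obar (R : pzRingType) (x : 'M[R]_2) : 'M[R]_2 :=
  \matrix_(i < 2, j < 2) if i == j then x (rev_ord i) (rev_ord j) else - x i j.

Definition omul (R : pzRingType) (a b : oct R) : oct R :=
  (a.1 *m b.1 + obar b.2 *m a.2, b.2 *m a.1 + a.2 *m obar b.1).

(* Coordinates in the ordered basis (E11,0),(E12,0),(E21,0),(E22,0),
   (0,E11),(0,E12),(0,E21),(0,E22). *)
Definition vec_of_oct (R : pzRingType) (p : oct R) : 'cV[R]_8 :=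
  \col_(k < 8) if (k < 4)%N
               then p.1 (inord (k %/ 2)) (inord (k %% 2))
               else p.2 (inord ((k - 4) %/ 2)) (inord ((k - 4) %% 2)).

Definition oct_of_vec (R : pzRingType) (v : 'cV[R]_8) : oct R :=
  (\matrix_(i < 2, j < 2) v (inord (2 * i + j)) 0,
   \matrix_(i < 2, j < 2) v (inord (4 + 2 * i + j)) 0).

Definition oact (R : pzRingType) (g : 'M[R]_8) (p : oct R) : oct R :=
  oct_of_vec (g *m vec_of_oct p).

Definition isAut (R : fieldType) (g : 'M[R]_8) : Prop :=
  g \in unitmx /\ forall p q : oct R, oact g (omul p q) = omul (oact g p) (oact g q).

Definition innr (R : fieldType) (g x : 'M[R]_8) : 'M[R]_8 := g *m x *m invmx g.

Definition tmx (R : fieldType) (b c : R) : 'M[R]_8 :=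
  diag_mx (\row_(i < 8) nth 0 [:: 1; b * c; b^-1 * c^-1; 1; c^-1; b; b^-1; c] i).

(* theta1 = I_{t1} and theta2 = I_{t2} are isomorphic: there is g in G(k) with
   I_{t2} = I_g I_{t1} I_g^{-1} as automorphisms of the algebraic group G, i.e.
   the equality holds on G(L) for every field extension L of k. *)
Definition inv_iso (k : fieldType) (t1 t2 : 'M[k]_8) : Prop :=
  exists g : 'M[k]_8, isAut g /\
    forall (L : fieldType) (f : {rmorphism k -> L}) (x : 'M[L]_8),
      isAut x ->
      innr (map_mx f t2) x =
      innr (map_mx f g) (innr (map_mx f t1) (innr (invmx (map_mx f g)) x)).

(* Main.v *)
Require Import Defs.
From HB Require Import structures.
From mathcomp Require Import all_boot all_order all_algebra.
From mathcomp Require Import ring.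
Import GRing.Theory.
Local Open Scope ring_scope.
Definition mk2 {k : fieldType} (a b c d : k) : 'M[k]_2 :=
  \matrix_(i<2,j<2) nth 0 (nth [::] [:: [:: a; b]; [:: c; d]] i) j.
Definition sgp {k : fieldType} (pl : seq nat) (sl : seq k) : 'M[k]_8 :=
  \matrix_(i<8,j<8) if (i == nth 0%N pl j :> nat) then nth 0 sl j else 0.

Lemma inord_eq n m p : (m < n.+1)%N -> (p < n.+1)%N -> ((inord m : 'I_n.+1) == inord p) = (m == p).
Proof. move=> Hm Hp. apply/eqP/eqP => [H|->//]. by rewrite -(inordK Hm) H inordK. Qed.
Lemma sum2 {k : fieldType} (F : 'I_2 -> k) : \sum_(i < 2) F i = F (inord 0) + F (inord 1).
Proof. rewrite big_ord_recr big_ord_recr big_ord0 /= add0r.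
 by congr (F _ + F _); apply: (@ord_inj 2); rewrite inordK. Qed.
Lemma sum8 {k : fieldType} (F : 'I_8 -> k) : \sum_(i < 8) F i = F (inord 0) + F (inord 1) + F (inord 2) + F (inord 3)
  + F (inord 4) + F (inord 5) + F (inord 6) + F (inord 7).
Proof. rewrite !big_ord_recr big_ord0 /= add0r.
 by congr (F _ + F _ + F _ + F _ + F _ + F _ + F _ + F _); apply: (@ord_inj 8); rewrite inordK. Qed.

Lemma ord2P (P : 'I_2 -> Prop) : P (inord 0) -> P (inord 1) -> forall i, P i.
Proof. move=> H0 H1 [[|[|//]] Hi].
 - by have -> : Ordinal Hi = inord 0 by apply/val_inj; rewrite /= inordK.
 - by have -> : Ordinal Hi = inord 1 by apply/val_inj; rewrite /= inordK.
Qed.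

Lemma octE {k : fieldType} (p : oct k) : p = (mk2 (p.1 (inord 0) (inord 0)) (p.1 (inord 0) (inord 1)) (p.1 (inord 1) (inord 0)) (p.1 (inord 1) (inord 1)),
   mk2 (p.2 (inord 0) (inord 0)) (p.2 (inord 0) (inord 1)) (p.2 (inord 1) (inord 0)) (p.2 (inord 1) (inord 1))).
Proof.
case: p => x y /=; congr pair; apply/matrixP;
 (apply: ord2P; apply: ord2P; rewrite mxE ?inordK //).
Qed.


Lemma mk2P {k : fieldType} (a b c d a' b' c' d' : k) : a = a' -> b = b' -> c = c' -> d = d' -> mk2 a b c d = mk2 a' b' c' d'.
Proof. by move=> -> -> -> ->. Qed.

Lemma omul_mk {k : fieldType} (a b c d e f g h a' b' c' d' e' f' g' h' : k) :
  omul (mk2 a b c d, mk2 e f g h) (mk2 a' b' c' d', mk2 e' f' g' h') =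
  (mk2 (a*a'+b*c' + (h'*e - f'*g)) (a*b'+b*d' + (h'*f - f'*h))
       (c*a'+d*c' + (e'*g - g'*e)) (c*b'+d*d' + (e'*h-g'*f)),
   mk2 (e'*a+f'*c + (e*d' - f*c')) (e'*b+f'*d + (f*a' - e*b'))
       (g'*a+h'*c + (g*d' - h*c')) (g'*b+h'*d + (h*a' - g*b'))).
Proof.
rewrite /omul /obar; congr pair; apply/matrixP; apply: ord2P; apply: ord2P.
all: rewrite !mxE !sum2 !mxE !inord_eq // !inordK //=.
all: rewrite ?inordK //=.
all: ring.
Qed.

Lemma ord8P (P : 'I_8 -> Prop) : P (inord 0) -> P (inord 1) -> P (inord 2) -> P (inord 3) ->
  P (inord 4) -> P (inord 5) -> P (inord 6) -> P (inord 7) -> forall i, P i.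
Proof.
move=> H0 H1 H2 H3 H4 H5 H6 H7 [i Hi].
have -> : Ordinal Hi = inord i by apply: (@ord_inj 8); rewrite inordK.
by do 8 (case: i Hi => [|i] Hi //).
Qed.

Lemma conj_lemma (L : fieldType) (g t1 t2 x : 'M[L]_8) :
  g \in unitmx -> t1 \in unitmx -> g *m t1 = t2 *m g ->
  innr t2 x = innr g (innr t1 (innr (invmx g) x)).
Proof.
move=> Ug Ut1 E.
have E1 : g *m t1 *m invmx g = t2 by rewrite E -mulmxA mulmxV // mulmx1.
have Ugt : g *m t1 \in unitmx by rewrite unitmx_mul Ug Ut1.
have Ut2 : t2 \in unitmx by rewrite -E1 !unitmx_mul Ug Ut1 unitmx_inv.
have H : t2 *m (g *m invmx t1 *m invmx g) = 1%:M.
  by rewrite -E1 !mulmxA mulmxKV // mulmxK // mulmxV.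
have E2 : g *m invmx t1 *m invmx g = invmx t2.
  by rewrite -[LHS]mul1mx -(mulVmx Ut2) -(mulmxA (invmx t2)) H mulmx1.
rewrite /innr invmxK -E2 -E1 !mulmxA; done.
Qed.

Lemma iso_of (k : fieldType) (g t1 t2 : 'M[k]_8) :
  isAut g -> t1 \in unitmx -> g *m t1 = t2 *m g -> inv_iso t1 t2.
Proof.
move=> Ag Ut E; exists g; split => // L f x _.
apply: conj_lemma; rewrite ?map_unitmx //; first by case: Ag.
by rewrite -!map_mxM E.
Qed.


Definition G1 (k : fieldType) := sgp (k:=k) [:: 0; 1; 2; 3; 6; 7; 4; 5]%N [:: 1; 1; 1; 1; 1; 1; -1; -1].
Definition H1 (k : fieldType) := sgp (k:=k) [:: 0; 1; 2; 3; 6; 7; 4; 5]%N [:: 1; 1; 1; 1; -1; -1; 1; 1].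

Lemma oactG1 (k : fieldType) (a b c d e f g h : k) :
  oact (G1 k) (mk2 a b c d, mk2 e f g h) = (mk2 a b c d, mk2 (-g) (-h) e f).
Proof.
rewrite /oact /oct_of_vec; congr pair; apply/matrixP; apply: ord2P; apply: ord2P.
all: rewrite !mxE !sum8 !mxE.
all: rewrite !(@inordK 7) //=; rewrite ?inordK //=.
all: ring.
Qed.

Lemma GH1 (k : fieldType) : G1 k *m H1 k = 1%:M.
Proof.
apply/matrixP; apply: ord8P; apply: ord8P.
all: rewrite !mxE sum8 !mxE !(@inordK 7) //=.
all: rewrite ?inord_eq //=.
all: ring.
Qed.

Lemma Gaut1 (k : fieldType) : isAut (G1 k).
Proof.
split; first by case: (mulmx1_unit (GH1 k)).
move=> p q; rewrite (octE p) (octE q).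
move: (p.1 _ _) (p.1 _ _) (p.1 _ _) (p.1 _ _) (p.2 _ _) (p.2 _ _) (p.2 _ _) (p.2 _ _).
move: (q.1 _ _) (q.1 _ _) (q.1 _ _) (q.1 _ _) (q.2 _ _) (q.2 _ _) (q.2 _ _) (q.2 _ _).
move=> a b c d e f g h a' b' c' d' e' f' g' h'.
rewrite omul_mk !oactG1 omul_mk; congr pair; apply: mk2P; ring.
Qed.

Definition G2 (k : fieldType) := sgp (k:=k) [:: 0; 4; 7; 3; 1; 5; 6; 2]%N [:: 1; 1; 1; 1; 1; -1; -1; 1].
Definition H2 (k : fieldType) := sgp (k:=k) [:: 0; 4; 7; 3; 1; 5; 6; 2]%N [:: 1; 1; 1; 1; 1; -1; -1; 1].

Lemma oactG2 (k : fieldType) (a b c d e f g h : k) :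
  oact (G2 k) (mk2 a b c d, mk2 e f g h) = (mk2 a e h d, mk2 b (-f) (-g) c).
Proof.
rewrite /oact /oct_of_vec; congr pair; apply/matrixP; apply: ord2P; apply: ord2P.
all: rewrite !mxE !sum8 !mxE.
all: rewrite !(@inordK 7) //=; rewrite ?inordK //=.
all: ring.
Qed.

Lemma GH2 (k : fieldType) : G2 k *m H2 k = 1%:M.
Proof.
apply/matrixP; apply: ord8P; apply: ord8P.
all: rewrite !mxE sum8 !mxE !(@inordK 7) //=.
all: rewrite ?inord_eq //=.
all: ring.
Qed.

Lemma Gaut2 (k : fieldType) : isAut (G2 k).
Proof.
split; first by case: (mulmx1_unit (GH2 k)).
move=> p q; rewrite (octE p) (octE q).
move: (p.1 _ _) (p.1 _ _) (p.1 _ _) (p.1 _ _) (p.2 _ _) (p.2 _ _) (p.2 _ _) (p.2 _ _).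
move: (q.1 _ _) (q.1 _ _) (q.1 _ _) (q.1 _ _) (q.2 _ _) (q.2 _ _) (q.2 _ _) (q.2 _ _).
move=> a b c d e f g h a' b' c' d' e' f' g' h'.
rewrite omul_mk !oactG2 omul_mk; congr pair; apply: mk2P; ring.
Qed.

Definition G3 (k : fieldType) := sgp (k:=k) [:: 0; 6; 5; 3; 1; 7; 4; 2]%N [:: 1; 1; -1; 1; 1; -1; 1; 1].
Definition H3 (k : fieldType) := sgp (k:=k) [:: 0; 4; 7; 3; 6; 2; 1; 5]%N [:: 1; 1; 1; 1; 1; -1; 1; -1].

Lemma oactG3 (k : fieldType) (a b c d e f g h : k) :
  oact (G3 k) (mk2 a b c d, mk2 e f g h) = (mk2 a e h d, mk2 g (-c) b (-f)).
Proof.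
rewrite /oact /oct_of_vec; congr pair; apply/matrixP; apply: ord2P; apply: ord2P.
all: rewrite !mxE !sum8 !mxE.
all: rewrite !(@inordK 7) //=; rewrite ?inordK //=.
all: ring.
Qed.

Lemma GH3 (k : fieldType) : G3 k *m H3 k = 1%:M.
Proof.
apply/matrixP; apply: ord8P; apply: ord8P.
all: rewrite !mxE sum8 !mxE !(@inordK 7) //=.
all: rewrite ?inord_eq //=.
all: ring.
Qed.

Lemma Gaut3 (k : fieldType) : isAut (G3 k).
Proof.
split; first by case: (mulmx1_unit (GH3 k)).
move=> p q; rewrite (octE p) (octE q).
move: (p.1 _ _) (p.1 _ _) (p.1 _ _) (p.1 _ _) (p.2 _ _) (p.2 _ _) (p.2 _ _) (p.2 _ _).
move: (q.1 _ _) (q.1 _ _) (q.1 _ _) (q.1 _ _) (q.2 _ _) (q.2 _ _) (q.2 _ _) (q.2 _ _).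
move=> a b c d e f g h a' b' c' d' e' f' g' h'.
rewrite omul_mk !oactG3 omul_mk; congr pair; apply: mk2P; ring.
Qed.

Lemma tunit (k : fieldType) (b c : k) : b \in [:: 1; -1] -> c \in [:: 1; -1] -> tmx b c \in unitmx.
Proof.
move=> Hb Hc.
rewrite unitmxE det_diag unitfE !big_ord_recr big_ord0 /= !mxE /=.
move: Hb Hc; rewrite !inE => /orP[/eqP->|/eqP->] /orP[/eqP->|/eqP->].
all: rewrite ?invrN1 ?invr1 !mul1r ?mulN1r ?mulrN1 ?opprK ?oppr_eq0 ?oner_eq0 //.
all: rewrite ?mulr1 ?mulNr ?mulr1 ?oppr_eq0 ?oner_eq0 //.
Qed.


Lemma comm1 (k : fieldType) : G1 k *m tmx (-1) 1 = tmx 1 (-1) *m G1 k.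
Proof.
rewrite /tmx mul_mx_diag mul_diag_mx; apply/matrixP; apply: ord8P; apply: ord8P.
all: rewrite !mxE !(@inordK 7) //= ?invrN1 ?invr1; ring.
Qed.
Lemma comm2 (k : fieldType) : G2 k *m tmx (-1) (-1) = tmx (-1) 1 *m G2 k.
Proof.
rewrite /tmx mul_mx_diag mul_diag_mx; apply/matrixP; apply: ord8P; apply: ord8P.
all: rewrite !mxE !(@inordK 7) //= ?invrN1 ?invr1; ring.
Qed.
Lemma comm3 (k : fieldType) : G3 k *m tmx (-1) (-1) = tmx 1 (-1) *m G3 k.
Proof.
rewrite /tmx mul_mx_diag mul_diag_mx; apply/matrixP; apply: ord8P; apply: ord8P.
all: rewrite !mxE !(@inordK 7) //= ?invrN1 ?invr1; ring.
Qed.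

Theorem mainTheorem6 (k : fieldType) (char2 : (2%:R : k) != 0) :
  [/\ inv_iso (tmx (-1 : k) (-1)) (tmx (-1) 1),
      inv_iso (tmx (-1 : k) (-1)) (tmx 1 (-1)) &
      inv_iso (tmx (-1 : k) 1) (tmx 1 (-1))].
Proof.
split.
- apply: (@iso_of k (G2 k) _ _ (Gaut2 k)); [by apply: tunit; rewrite !inE eqxx ?orbT | exact: comm2].
- apply: (@iso_of k (G3 k) _ _ (Gaut3 k)); [by apply: tunit; rewrite !inE eqxx ?orbT | exact: comm3].
- apply: (@iso_of k (G1 k) _ _ (Gaut1 k)); [by apply: tunit; rewrite !inE eqxx ?orbT | exact: comm1].
Qed.
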